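(* Let $\mathcal{AF}_{\vdash}=(\vdash,\overline{\cdot},\widehat{\cdot})$ be a pointed setting. Then $\mathcal{AF}_{\vdash}$ satisfies Cumulativity and Extensional Cumulativity for grounded semantics: for all $\mathcal{S}\cup\{\phi,\psi\}\subseteq\mathcal{L}$ with $\mathcal{S}\mathrel{\mid\!\sim}_{\mathsf{Grd}}\phi$, (i) $\mathcal{S}\mathrel{\mid\!\sim}^{+\phi}_{\mathsf{Grd}}\psi$ iff $\mathcal{S}\mathrel{\mid\!\sim}_{\mathsf{Grd}}\psi$, and (ii) $\mathsf{Grd}(\mathcal{AF}_{\vdash}(\mathcal{S}))=\mathsf{Grd}(\mathcal{AF}_{\vdash^{+\phi}}(\mathcal{S}))\cap\mathit{Arg}_{\vdash}(\mathcal{S})$.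
   Context: $\mathcal{L}$ is a set of formulas, $\wp_{\sf fin}(X)$ the finite subsets of $X$. A setting is $(\vdash,\overline{\cdot},\widehat{\cdot})$ with ${\vdash}\subseteq\wp_{\sf fin}(\mathcal{L})\times\mathcal{L}$ arbitrary, $\overline{\cdot}:\mathcal{L}\to\wp(\mathcal{L})$, $\widehat{\cdot}$ assigning to each nonempty finite set of formulas a finite set of formulas, with $\widehat{\emptyset}=\emptyset$. $\mathit{Arg}_{\vdash}(\mathcal{S})=\{(\Gamma,\gamma):\Gamma\subseteq\mathcal{S}\text{ finite},\Gamma\vdash\gamma\}$; in $\mathcal{AF}_{\vdash}(\mathcal{S})$, $(\Gamma,\gamma)$ attacks $(\Gamma',\gamma')$ iff $\gamma\in\overline{\phi}$ for some $\phi\in\widehat{\Gamma'}$. A set of arguments is complete iff it is conflict-free, defends each member (every attacker of a member is attacked by a member) and contains every argument it defends; $\mathsf{Grd}(\mathcal{AF}_{\vdash}(\mathcal{S}))$ is the $\subseteq$-minimal complete set. $\mathcal{S}\mathrel{\mid\!\sim}_{\mathsf{Grd}}\phi$ iff the grounded extension of $\mathcal{AF}_{\vdash}(\mathcal{S})$ contains an argument with conclusion $\phi$. For $\phi\in\mathcal{L}$, $\vdash^{+\phi}$ is the transitive closure of ${\vdash}\cup\{(\emptyset,\phi)\}$, and $\mathrel{\mid\!\sim}^{+\phi}_{\mathsf{Grd}}$ is the grounded consequence relation of the setting $(\vdash^{+\phi},\overline{\cdot},\widehat{\cdot})$. The setting is pointed iff (1) $\widehat{\Gamma\cup\Delta}=\widehat{\Gamma}\cup\widehat{\Delta}$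 for all finite $\Gamma,\Delta$, and (2) $\vdash$ satisfies Cut: for every $\phi\in\mathcal{L}$ and all finite $\Gamma,\Delta$ and $\gamma$, if $\Gamma\vdash\phi$ and $\Delta\vdash^{+\phi}\gamma$ then $\Gamma\cup\Delta\vdash\gamma$. *)

(* Defs.v *)
From mathcomp Require Import all_boot finmap.
From Stdlib Require Import ClassicalEpsilon.
Set Implicit Arguments. Unset Strict Implicit. Unset Printing Implicit Defensive.
Local Open Scope fset_scope.

Section Setting.
Variable L : choiceType.

Definition arg := ({fset L} * L)%type.

Definition Args (der : {fset L} -> L -> Prop) (S : L -> Prop) (a : arg) : Prop :=
  (forall x, x \in a.1 -> S x) /\ der a.1 a.2.

Definition attacks (bar : L -> L -> Prop) (hat : {fset L} -> {fset L})
  (a b : arg) : Prop := exists2 f, f \in hat b.1 & bar f a.2.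

Definition conflict_free (Att : arg -> arg -> Prop) (E : arg -> Prop) :=
  forall a b, E a -> E b -> ~ Att a b.

Definition defends (Ar : arg -> Prop) (Att : arg -> arg -> Prop)
  (E : arg -> Prop) (a : arg) :=
  forall b, Ar b -> Att b a -> exists2 c, E c & Att c b.

Definition complete (Ar : arg -> Prop) (Att : arg -> arg -> Prop) (E : arg -> Prop) :=
  [/\ (forall a, E a -> Ar a),
      conflict_free Att E,
      (forall a, E a -> defends Ar Att E a) &
      (forall a, Ar a -> defends Ar Att E a -> E a)].

Definition grounded (Ar : arg -> Prop) (Att : arg -> arg -> Prop) (E : arg -> Prop) :=
  complete Ar Att E /\
  forall E', complete Ar Att E' -> (forall a, E' a -> E a) -> forall a, E a -> E' a.

Definition Grd (Ar : arg -> Prop) (Att : arg -> arg -> Prop) : arg -> Prop :=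
  epsilon (inhabits (fun _ : arg => False)) (grounded Ar Att).

Definition grd_cons (der : {fset L} -> L -> Prop) (bar : L -> L -> Prop)
  (hat : {fset L} -> {fset L}) (S : L -> Prop) (phi : L) : Prop :=
  exists a, Grd (Args der S) (attacks bar hat) a /\ a.2 = phi.

(* |-^{+phi}: transitive (cut) closure of |- together with (emptyset, phi). *)
Inductive plus_der (der : {fset L} -> L -> Prop) (phi : L) : {fset L} -> L -> Prop :=
  | pd_base G g : der G g -> plus_der der phi G g
  | pd_phi : plus_der der phi fset0 phi
  | pd_cut G D psi g :
      plus_der der phi G psi -> plus_der der phi (psi |` D) g ->
      plus_der der phi (G `|` D) g.

Definition pointed (der : {fset L} -> L -> Prop) (hat : {fset L} -> {fset L}) : Prop :=
  (forall G D, hat (G `|` D) = hat G `|` hat D) /\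
  (forall phi G D g, der G phi -> plus_der der phi D g -> der (G `|` D) g).

End Setting.

(* Main.v *)
Require Import Defs.
From mathcomp Require Import all_boot finmap.
From Stdlib Require Import ClassicalEpsilon.
Local Open Scope fset_scope.

Section Aux.
Variable L : choiceType.
Implicit Types (Ar : arg L -> Prop) (Att : arg L -> arg L -> Prop).

Definition prefix Ar Att (P : arg L -> Prop) :=
  forall a, Ar a -> defends Ar Att P a -> P a.

Definition lfp Ar Att (a : arg L) := forall P, prefix Ar Att P -> P a.

Lemma defends_mono Ar Att (E E' : arg L -> Prop) a :
  (forall x, E x -> E' x) -> defends Ar Att E a -> defends Ar Att E' a.
Proof.
move=> H D b Hb Hba; have [c Hc Hcb] := D b Hb Hba; exists c; auto.
Qed.

Lemma lfp_grounded Ar Att : grounded Ar Att (lfp Ar Att).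
Proof.
have Fsub : forall a, Ar a -> defends Ar Att (lfp Ar Att) a -> lfp Ar Att a.
  move=> a Ha Hd P HP; apply: (HP) => //; apply: defends_mono Hd => x Hx; exact: Hx P HP.
have sub : forall a0, lfp Ar Att a0 -> Ar a0.
  by move=> a0 H0; apply: H0 => x.
have cf : conflict_free Att (lfp Ar Att).
  pose Q := fun y => [/\ lfp Ar Att y, (forall b, lfp Ar Att b -> ~ Att b y) &
                 (forall b, lfp Ar Att b -> ~ Att y b)].
  have HQ : prefix Ar Att Q.
    rewrite /prefix; move=> a1 Ha1 Hd; split.
    - apply: Fsub => //; apply: defends_mono Hd; by move=> x [].
    - move=> b Hb Hba; have [c [_ _ Hc] Hcb] := Hd b (sub _ Hb) Hba; exact: Hc _ Hb Hcb.
    - move=> b Hb Hab.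
      have Hdb : defends Ar Att (lfp Ar Att) b.
        have HP : prefix Ar Att (fun x => lfp Ar Att x /\ defends Ar Att (lfp Ar Att) x).
          move=> x Hx Hdx; split.
            apply: Fsub => //; apply: defends_mono Hdx; by move=> y [].
          apply: defends_mono Hdx; by move=> y [].
        by have [] := Hb _ HP.
      have [d Hd' Hda] := Hdb a1 Ha1 Hab.
      have [c [_ _ Hc] Hcd] := Hd d (sub _ Hd') Hda; exact: Hc _ Hd' Hcd.
  move=> a b Ha Hb; have [_ _ H] := Ha Q HQ; exact: H _ Hb.
have def : forall a, lfp Ar Att a -> defends Ar Att (lfp Ar Att) a.
  have HP : prefix Ar Att (fun x => lfp Ar Att x /\ defends Ar Att (lfp Ar Att) x).
    move=> x Hx Hdx; split.
      apply: Fsub => //; apply: defends_mono Hdx; by move=> y [].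
    apply: defends_mono Hdx; by move=> y [].
  by move=> a Ha; have [] := Ha _ HP.
split; first by split.
move=> E' [s1 s2 s3 s4] HE a Ha; exact: Ha E' s4.
Qed.

Lemma grounded_least Ar Att E P a :
  grounded Ar Att E -> prefix Ar Att P -> E a -> P a.
Proof.
move=> [[e1 e2 e3 e4] Hmin] HP Ha.
have [Hc _] := lfp_grounded Ar Att.
have Hsub : forall x, lfp Ar Att x -> E x by move=> x Hx; exact: Hx E e4.
exact: (Hmin _ Hc Hsub a Ha) P HP.
Qed.

Lemma Grd_grounded Ar Att : grounded Ar Att (Grd Ar Att).
Proof.
rewrite /Grd; apply: epsilon_spec; exists (lfp Ar Att); exact: lfp_grounded.
Qed.

End Aux.
Arguments prefix {L}.
Arguments lfp {L}.

Theorem theorem2 (L : choiceType) (der : {fset L} -> L -> Prop)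
  (bar : L -> L -> Prop) (hat : {fset L} -> {fset L})
  (hat0 : hat fset0 = fset0) (Hpointed : pointed der hat)
  (S : L -> Prop) (phi : L) :
  grd_cons der bar hat S phi ->
  (forall psi : L,
     grd_cons (plus_der der phi) bar hat S psi <-> grd_cons der bar hat S psi) /\
  (forall a : arg L,
     Grd (Args der S) (attacks bar hat) a <->
     (Grd (Args (plus_der der phi) S) (attacks bar hat) a /\ Args der S a)).
Proof.
move=> [A0 [HA0 HA0phi]].
have [hU cut] := Hpointed.
set Ar := Args der S; set Arp := Args (plus_der der phi) S.
set Att := attacks bar hat.
set G := Grd Ar Att; set Gp := Grd Arp Att.
have gG : grounded Ar Att G := Grd_grounded _ Ar Att.
have gGp : grounded Arp Att Gp := Grd_grounded _ Arp Att.
have [[g1 g2 g3 g4] _] := gG.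
have [[p1 p2 p3 p4] _] := gGp.
pose ext (b : arg L) : arg L := (A0.1 `|` b.1, b.2).
have ArA0 : Ar A0 := g1 _ HA0.
have K1 : forall b, Arp b -> Ar (ext b).
  move=> b [Hb1 Hb2]; split.
    move=> x /=; rewrite in_fsetU => /orP [Hx|Hx]; [exact: ArA0.1 | exact: Hb1].
  apply: (cut phi); last exact: Hb2.
  by rewrite -HA0phi; exact: ArA0.2.
have K1att : forall c b, Att c (ext b) -> Att c A0 \/ Att c b.
  move=> c b [f]; rewrite /= hU in_fsetU => /orP [Hf|Hf] Hb; [left|right]; by exists f.
have K1att' : forall c b, Att c b -> Att c (ext b).
  move=> c b [f Hf Hb]; exists f => //; by rewrite /= hU in_fsetU Hf orbT.
have K2 : forall b, Ar b -> Arp b.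
  move=> b [H1 H2]; split => //; exact: pd_base.
have K3 : forall c c' b, c.2 = c'.2 -> Att c b -> Att c' b.
  move=> c c' b He [f Hf Hb]; exists f => //; by rewrite -He.
have GGp : forall a, G a -> Gp a.
  move=> a Ha.
  have HP : prefix Ar Att (fun x => G x /\ Gp x).
    move=> x Hx Hd; split.
      apply: g4 => //; apply: defends_mono Hd; by move=> y [].
    apply: p4; first exact: K2.
    move=> b Hb Hbx.
    have [c [Gc Gpc] Hcb] := Hd (ext b) (K1 _ Hb) (K3 _ _ _ erefl Hbx).
    case: (K1att _ _ Hcb) => H; last by exists c.
    by case: (g2 _ _ Gc HA0 H).
  by have [] := @grounded_least _ _ _ _ _ _ gG HP Ha.
have GpG : forall b, Gp b -> G (ext b).
  move=> b Hb.
  have HP : prefix Arp Att (fun x => Arp x /\ G (ext x)).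
    move=> x Hx Hd; split => //; apply: g4; first exact: K1.
    move=> d Hd' Hdx; case: (K1att _ _ Hdx) => H.
      exact: g3 _ HA0 d Hd' H.
    have [c [_ Gc] Hcd] := Hd d (K2 _ Hd') H.
    exists (ext c) => //; exact: K3 _ _ _ erefl Hcd.
  by have [] := @grounded_least _ _ _ _ _ _ gGp HP Hb.
have extG : forall b, Ar b -> G (ext b) -> G b.
  move=> b Hb He; apply: g4 => // d Hd Hdb.
  exact: g3 _ He d Hd (K1att' _ _ Hdb).
split.
  move=> psi; split.
    move=> [a [Ha Hpsi]]; exists (ext a); split => //; exact: GpG.
  move=> [a [Ha Hpsi]]; exists a; split => //; exact: GGp.
move=> a; split.
  move=> Ha; split; [exact: GGp | exact: g1].
move=> [Ha Har]; apply: extG => //; exact: GpG.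
Qed.
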